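(* In the setting described in the context, let $\bar\eta>0$ satisfy $g(\mathbf Q)-g(\mathbf X)\ge\bar\eta\,d_F^2(\mathbf X,\mathbf Q)$ for all $\mathbf X\in\mathrm{St}(d,K)$. If $\hat{\mathbf X}$ is a global optimal solution of $\max_{\mathbf X\in\mathrm{St}(d,K)}f(\mathbf X)$, where $f(\mathbf X)=g(\mathbf X)+\sum_{k=1}^K\mathbf x_k^\top\Delta_k\mathbf x_k$, then $$d_F(\hat{\mathbf X},\mathbf Q)\le\frac{2\sqrt K}{\bar\eta}\max_{k\in[K]}\|\Delta_k\|.$$
   Context: $d>K\ge1$, $\mathrm{St}(d,K)=\{\mathbf X\in\mathbb R^{d\times K}:\mathbf X^\top\mathbf X=\mathbf I_K\}$, $\mathbf Q\in\mathrm{St}(d,K)$, $\lambda_1>\dots>\lambda_K>0$, $\boldsymbol\Theta=\mathrm{diag}(\sqrt{\lambda_1},\dots,\sqrt{\lambda_K})$. Integers $L\ge1$, $n_1,\dots,n_L\ge1$, $n=\sum_ln_l$; $v_1>\dots>v_L>0$; data $\mathbf y_{l,i}=\mathbf Q\boldsymbol\Theta\mathbf z_{l,i}+\boldsymbol\eta_{l,i}\in\mathbb R^d$ with $\mathbf z_{l,i}$ i.i.d. $\mathcal N(\mathbf0,\mathbf I_K)$ independent of $\boldsymbol\eta_{l,i}$ i.i.d. $\mathcal N(\mathbf0,v_l\mathbf I_d)$. $w_{l,k}=\lambda_k/(\lambda_k+v_l)$, $a_k=\sum_lw_{l,k}\frac{n_l}{n}\frac1{v_l}$, $\gamma_k=\sum_lw_{l,k}\frac{n_l}{n}$,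 $\mathbf M_k=\frac1n\sum_l\sum_i\frac{w_{l,k}}{v_l}\mathbf y_{l,i}\mathbf y_{l,i}^\top-\gamma_k\mathbf I_d$, $\Delta_k=\mathbf M_k-a_k\mathbf Q\boldsymbol\Theta^2\mathbf Q^\top$ ($\|\cdot\|$ operator norm). $g(\mathbf X)=\mathrm{tr}(\mathbf X^\top\mathbf Q\boldsymbol\Theta^2\mathbf Q^\top\mathbf X\,\mathrm{diag}(a_1,\dots,a_K))$, $\mathbf x_k$ is the $k$-th column of $\mathbf X$, $d_F(\mathbf X,\mathbf Q)=\min_{\mathbf q\in\{\pm1\}^K}\|\mathbf X-\mathbf Q\,\mathrm{diag}(\mathbf q)\|_F$. *)

(* Defs.v *)
From HB Require Import structures.
From mathcomp Require Import all_boot all_order all_algebra.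
From mathcomp Require Import classical_sets reals.
Set Implicit Arguments. Unset Strict Implicit. Unset Printing Implicit Defensive.
Import Order.TTheory GRing.Theory Num.Theory.
Local Open Scope classical_set_scope.
Local Open Scope ring_scope.

Section Defs.
Variable R : realType.

Definition vnorm (n : nat) (x : 'cV[R]_n) : R := Num.sqrt (\sum_i x i 0 ^+ 2).

Definition opnorm (m n : nat) (A : 'M[R]_(m, n)) : R :=
  sup [set vnorm (A *m x) | x in [set x : 'cV[R]_n | vnorm x = 1]].

Definition frob (m n : nat) (A : 'M[R]_(m, n)) : R :=
  Num.sqrt (\sum_i \sum_j A i j ^+ 2).

Definition stiefel (d K : nat) (X : 'M[R]_(d, K)) : Prop := X^T *m X = 1%:M.

Definition signv (K : nat) (q : {ffun 'I_K -> bool}) : 'M[R]_K :=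
  diag_mx (\row_k (if q k then -1 else 1)).

Definition dF (d K : nat) (X Q : 'M[R]_(d, K)) : R :=
  \big[Num.min/frob (X - Q)]_(q : {ffun 'I_K -> bool}) frob (X - Q *m signv q).

Section Model.
Variables (d K L : nat) (ns : 'I_L -> nat) (v : 'I_L -> R) (lam : 'I_K -> R)
  (Q : 'M[R]_(d, K))
  (z : forall l : 'I_L, 'I_(ns l) -> 'cV[R]_K)
  (eta : forall l : 'I_L, 'I_(ns l) -> 'cV[R]_d).

Definition Theta : 'M[R]_K := diag_mx (\row_k Num.sqrt (lam k)).
Definition ydat (l : 'I_L) (i : 'I_(ns l)) : 'cV[R]_d := Q *m Theta *m @z l i + @eta l i.
Definition ntot : nat := \sum_l ns l.
Definition wgt (l : 'I_L) (k : 'I_K) : R := lam k / (lam k + v l).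
Definition acoef (k : 'I_K) : R :=
  \sum_l wgt l k * ((ns l)%:R / ntot%:R) * (v l)^-1.
Definition gamma (k : 'I_K) : R := \sum_l wgt l k * ((ns l)%:R / ntot%:R).
Definition Mk (k : 'I_K) : 'M[R]_d :=
  (ntot%:R)^-1 *: (\sum_l \sum_(i < ns l)
       (wgt l k / v l) *: (ydat i *m (ydat i)^T)) - (gamma k)%:M.
Definition Delta (k : 'I_K) : 'M[R]_d :=
  Mk k - acoef k *: (Q *m (Theta *m Theta) *m Q^T).
Definition gobj (X : 'M[R]_(d, K)) : R :=
  \tr (X^T *m Q *m (Theta *m Theta) *m Q^T *m X *m diag_mx (\row_k acoef k)).
Definition fobj (X : 'M[R]_(d, K)) : R :=
  gobj X + \sum_k ((col k X)^T *m Delta k *m col k X) 0 0.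
End Model.
End Defs.

Arguments ydat {R d K L} ns lam Q z eta l i.
Arguments Mk {R d K L} ns v lam Q z eta k.
Arguments Delta {R d K L} ns v lam Q z eta k.
Arguments fobj {R d K L} ns v lam Q z eta X.
Arguments gobj {R d K L} ns v lam Q X.

(* Main.v *)
Require Import Defs.
From HB Require Import structures.
From mathcomp Require Import all_boot all_order all_algebra.
From mathcomp Require Import classical_sets reals.
From mathcomp Require Import ring lra.
Import Order.TTheory GRing.Theory Num.Theory.
Set Implicit Arguments. Unset Strict Implicit.
Local Open Scope ring_scope.

Lemma cs (R : realFieldType) n (a b : 'I_n -> R) :
  (\sum_i a i * b i) ^+ 2 <= (\sum_i a i ^+ 2) * (\sum_i b i ^+ 2).
Proof.
have E : \sum_i \sum_j (a i * b j - a j * b i) ^+ 2 =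
   2 * ((\sum_i a i ^+ 2) * (\sum_i b i ^+ 2) - (\sum_i a i * b i) ^+ 2).
  have E1 : \sum_i \sum_j (a i * b j - a j * b i) ^+ 2 =
     \sum_i \sum_j (a i ^+ 2 * b j ^+ 2) + \sum_i \sum_j (a j ^+ 2 * b i ^+ 2)
     - 2 * \sum_i \sum_j (a i * b i) * (a j * b j).
    rewrite mulr_sumr -!big_split -sumrB /=; apply: eq_bigr => i _.
    rewrite mulr_sumr -!big_split -sumrB /=; apply: eq_bigr => j _.
    ring.
  rewrite E1 (exchange_big _ _ _ _ _ (fun i j => a j ^+ 2 * b i ^+ 2)) /=.
  have S1 : (\sum_i a i ^+ 2) * (\sum_i b i ^+ 2) = \sum_i \sum_j (a i ^+ 2 * b j ^+ 2).
    by rewrite mulr_suml; apply: eq_bigr => i _; rewrite mulr_sumr.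
  have S2 : (\sum_i a i * b i) ^+ 2 = \sum_i \sum_j (a i * b i) * (a j * b j).
    by rewrite expr2 mulr_suml; apply: eq_bigr => i _; rewrite mulr_sumr.
  rewrite S1 S2.
  ring.
have : 0 <= \sum_i \sum_j (a i * b j - a j * b i) ^+ 2.
  by apply: sumr_ge0 => i _; apply: sumr_ge0 => j _; exact: sqr_ge0.
rewrite E pmulr_rge0 // subr_ge0 //.
Qed.

Section H.
Variable R : realType.

Lemma abs_le_sq (x y : R) : 0 <= y -> x ^+ 2 <= y ^+ 2 -> `|x| <= y.
Proof.
move=> y0 h; rewrite -(ler_pXn2r (_ : 0 < 2)%N) ?nnegrE ?normr_ge0 //.
by rewrite real_normK ?num_real.
Qed.

Lemma vnorm_ge0 n (x : 'cV[R]_n) : 0 <= vnorm x.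
Proof. exact: sqrtr_ge0. Qed.

Lemma vnorm_sq n (x : 'cV[R]_n) : vnorm x ^+ 2 = \sum_i x i 0 ^+ 2.
Proof. by rewrite sqr_sqrtr //; apply: sumr_ge0 => i _; rewrite sqr_ge0. Qed.

Lemma vnormZ n (c : R) (x : 'cV[R]_n) : vnorm (c *: x) = `|c| * vnorm x.
Proof.
rewrite /vnorm; under eq_bigr => i _ do rewrite mxE exprMn.
by rewrite -mulr_sumr sqrtrM ?sqr_ge0 // sqrtr_sqr.
Qed.

Lemma dot_le n (u w : 'cV[R]_n) : `|(u^T *m w) 0 0| <= vnorm u * vnorm w.
Proof.
apply: abs_le_sq; first by rewrite mulr_ge0 // vnorm_ge0.
have -> : (u^T *m w) 0 0 = \sum_i u i 0 * w i 0.
  by rewrite !mxE; apply: eq_bigr => i _; rewrite mxE.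
by rewrite exprMn !vnorm_sq cs.
Qed.

Lemma frob_ge0 m n (A : 'M[R]_(m, n)) : 0 <= frob A.
Proof. exact: sqrtr_ge0. Qed.

Lemma mul_frob m n (A : 'M[R]_(m, n)) x : vnorm (A *m x) <= frob A * vnorm x.
Proof.
rewrite -[frob A * vnorm x]ger0_norm ?mulr_ge0 ?frob_ge0 ?vnorm_ge0 //.
rewrite -sqrtr_sqr [vnorm (A *m x)]/vnorm ler_sqrt ?sqr_ge0 // exprMn vnorm_sq /frob.
rewrite sqr_sqrtr; last by apply: sumr_ge0 => i _; apply: sumr_ge0 => j _; rewrite sqr_ge0.
rewrite mulr_suml; apply: ler_sum => i _.
have -> : (A *m x) i 0 = \sum_j A i j * x j 0 by rewrite mxE.
exact: cs.
Qed.

Lemma op_le n (A : 'M[R]_n) (w : 'cV[R]_n) : vnorm (A *m w) <= opnorm A * vnorm w.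
Proof.
have [w0|wpos] := eqVneq (vnorm w) 0.
  by have := mul_frob A w; rewrite w0 !mulr0.
have wp : 0 < vnorm w by rewrite lt_def wpos vnorm_ge0.
set u := (vnorm w)^-1 *: w.
have u1 : vnorm u = 1 by rewrite vnormZ ger0_norm ?invr_ge0 ?vnorm_ge0 // mulVf.
have hs : has_sup [set vnorm (A *m x) | x in [set x : 'cV[R]_n | vnorm x = 1]].
  split; first by exists (vnorm (A *m u)); exists u.
  exists (frob A) => _ [x /= x1 <-].
  by have := mul_frob A x; rewrite x1 mulr1.
have := sup_upper_bound hs (ex_intro2 _ _ u u1 erefl).
rewrite -scalemxAr vnormZ ger0_norm ?invr_ge0 ?vnorm_ge0 // => h.
rewrite -ler_pdivrMr // mulrC; exact: h.
Qed.

Lemma quad_le n (A : 'M[R]_n) (u w : 'cV[R]_n) :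
  `|(u^T *m A *m w) 0 0| <= vnorm u * (opnorm A * vnorm w).
Proof.
rewrite -mulmxA; apply: le_trans (dot_le _ _) _.
by apply: ler_wpM2l; [exact: vnorm_ge0 | exact: op_le].
Qed.


Definition sgn (b : bool) : R := if b then -1 else 1.

Lemma signv0 K : signv R [ffun _ : 'I_K => false] = 1%:M :> 'M[R]_K.
Proof.
apply/matrixP => i j; rewrite /signv !mxE ffunE /=.
by case: (i == j).
Qed.

Lemma dF_attained d K (X Q : 'M[R]_(d, K)) :
  exists q, dF X Q = frob (X - Q *m signv R q).
Proof.
rewrite /dF; apply: (big_ind (fun x => exists q, x = frob (X - Q *m signv R q))).
- by exists [ffun _ => false]; rewrite signv0 mulmx1.
- move=> x y [q1 ->] [q2 ->].
  have [h|h] := leP (frob (X - Q *m signv R q1)) (frob (X - Q *m signv R q2)).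
    by exists q1.
  by exists q2.
- by move=> q _; exists q.
Qed.

Lemma col_sign d K (Q : 'M[R]_(d, K)) q k :
  col k (Q *m signv R q) = sgn (q k) *: col k Q.
Proof.
by apply/matrixP => i j; rewrite /signv mul_mx_diag !mxE mulrC.
Qed.

Lemma sgn_sq b : sgn b * sgn b = 1.
Proof. by case: b; rewrite /sgn ?mulrNN mulr1. Qed.

Lemma sgn_norm b : `|sgn b| = 1.
Proof. by case: b; rewrite /sgn ?normrN normr1. Qed.

Lemma stiefel_col d K (X : 'M[R]_(d, K)) k : stiefel X -> vnorm (col k X) = 1.
Proof.
move=> h; have := congr1 (fun M : 'M_K => M k k) h; rewrite !mxE eqxx /= => e.
rewrite /vnorm -sqrtr1; congr Num.sqrt; apply: (etrans _ e).
by apply: eq_bigr => i _; rewrite !mxE expr2.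
Qed.

Lemma frob_cols d K (X : 'M[R]_(d, K)) : frob X ^+ 2 = \sum_k vnorm (col k X) ^+ 2.
Proof.
rewrite /frob sqr_sqrtr; last by apply: sumr_ge0 => i _; apply: sumr_ge0 => j _; rewrite sqr_ge0.
rewrite exchange_big /=; apply: eq_bigr => k _; rewrite vnorm_sq.
by apply: eq_bigr => i _; rewrite mxE.
Qed.

Lemma sum_cols d K (X : 'M[R]_(d, K)) :
  \sum_k vnorm (col k X) <= Num.sqrt (K%:R) * frob X.
Proof.
apply: le_trans (ler_norm _) _.
apply: abs_le_sq; first by rewrite mulr_ge0 ?sqrtr_ge0 ?frob_ge0.
rewrite exprMn sqr_sqrtr ?ler0n // frob_cols.
have := cs (fun _ : 'I_K => 1) (fun k => vnorm (col k X)).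
under eq_bigr => i _ do rewrite mul1r.
by rewrite expr1n sumr_const card_ord.
Qed.

End H.

Unset Implicit Arguments.

Theorem lemma8 (R : realType) (d K L : nat) (ns : 'I_L -> nat)
  (v : 'I_L -> R) (lam : 'I_K -> R) (Q : 'M[R]_(d, K))
  (z : forall l : 'I_L, 'I_(ns l) -> 'cV[R]_K)
  (eta : forall l : 'I_L, 'I_(ns l) -> 'cV[R]_d)
  (etabar : R) (Xhat : 'M[R]_(d, K)) :
  (K < d)%N -> (1 <= K)%N -> (1 <= L)%N ->
  stiefel Q ->
  (forall i j : 'I_K, (i < j)%N -> lam j < lam i) ->
  (forall k, 0 < lam k) ->
  (forall l, 1 <= ns l)%N ->
  (forall i j : 'I_L, (i < j)%N -> v j < v i) ->
  (forall l, 0 < v l) ->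
  0 < etabar ->
  (forall X : 'M[R]_(d, K), stiefel X ->
     gobj ns v lam Q Q - gobj ns v lam Q X >= etabar * dF X Q ^+ 2) ->
  stiefel Xhat ->
  (forall X : 'M[R]_(d, K), stiefel X ->
     fobj ns v lam Q z eta X <= fobj ns v lam Q z eta Xhat) ->
  dF Xhat Q <= 2 * Num.sqrt (K%:R) / etabar *
     \big[Num.max/0]_(k < K) opnorm (Delta ns v lam Q z eta k).
Proof.
move=> _ _ _ hQ _ _ _ _ _ he Hg hX Hf.
set D := Delta ns v lam Q z eta.
set M := \big[Num.max/0]_(k < K) opnorm (D k).
have M0 : 0 <= M by apply: bigmax_ge_id.
have HM : forall k, opnorm (D k) <= M by move=> k; apply: le_bigmax.
have [q Hq] := dF_attained Xhat Q.
set Q' := Q *m signv R q.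
have hg := Hg Xhat hX.
have hf := Hf Q hQ; rewrite /fobj -/D in hf.
have trZ : forall n (c : R) (u : 'cV[R]_n), (c *: u)^T = c *: u^T.
  by move=> n c u; apply/matrixP => i j; rewrite !mxE.
have qQ : forall k, ((col k Q)^T *m D k *m col k Q) 0 0
                  = ((col k Q')^T *m D k *m col k Q') 0 0.
  move=> k; rewrite /Q' col_sign trZ -scalemxAl -scalemxAr [in RHS]mxE.
  by rewrite -scalemxAl [in RHS]mxE mulrA sgn_sq mul1r.
have key : forall k, ((col k Xhat)^T *m D k *m col k Xhat) 0 0
     - ((col k Q')^T *m D k *m col k Q') 0 0
     <= 2 * M * vnorm (col k (Xhat - Q')).
  move=> k; have Hk := HM k; move: (D k) Hk => A Hk.
  set x := col k Xhat; set p := col k Q'.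
  have x1 : vnorm x = 1 := stiefel_col k hX.
  have p1 : vnorm p = 1.
    by rewrite /p /Q' col_sign vnormZ sgn_norm stiefel_col // mul1r.
  have -> : col k (Xhat - Q') = x - p by apply/matrixP => i j; rewrite !mxE.
  have E : x^T *m A *m x - p^T *m A *m p
         = x^T *m A *m (x - p) + (x - p)^T *m A *m p.
    have -> : (x - p)^T = x^T - p^T by apply/matrixP => i j; rewrite !mxE.
    rewrite mulmxBr mulmxBl.
    by rewrite mulmxBl addrA subrK.
  have E0 := congr1 (fun A : 'M[R]_1 => A 0 0) E.
  rewrite /= [LHS]mxE [(x^T *m A *m (x - p) + _) 0 0]mxE in E0.
  rewrite [(- (p^T *m A *m p)) 0 0]mxE in E0; rewrite E0.
  have ha := quad_le A x (x - p); have hb := quad_le A (x - p) p.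
  rewrite x1 p1 in ha hb.
  have w0 := vnorm_ge0 (x - p).
  have n1 := ler_norm ((x^T *m A *m (x - p)) 0 0).
  have n2 := ler_norm (((x - p)^T *m A *m p) 0 0).
  nra.
have sumb := sum_cols (Xhat - Q').
have dF0 : 0 <= dF Xhat Q by rewrite Hq frob_ge0.
have s0 : 0 <= Num.sqrt (K%:R : R) := sqrtr_ge0 _.
have ch : gobj ns v lam Q Q - gobj ns v lam Q Xhat <=
   \sum_k (((col k Xhat)^T *m D k *m col k Xhat) 0 0
     - ((col k Q')^T *m D k *m col k Q') 0 0).
  rewrite sumrB -(eq_bigr _ (fun k _ => qQ k)).
  lra.
have ch2 : \sum_k (((col k Xhat)^T *m D k *m col k Xhat) 0 0
     - ((col k Q')^T *m D k *m col k Q') 0 0)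
     <= 2 * M * (Num.sqrt (K%:R) * dF Xhat Q).
  apply: le_trans (ler_sum _ (fun k _ => key k)) _.
  rewrite -mulr_sumr Hq; apply: ler_wpM2l => //.
  by rewrite mulr_ge0.
have fin : etabar * dF Xhat Q ^+ 2 <= 2 * M * (Num.sqrt (K%:R) * dF Xhat Q).
  by apply: le_trans hg (le_trans ch ch2).
have -> : 2 * Num.sqrt (K%:R) / etabar * M = (2 * M * Num.sqrt (K%:R)) / etabar.
  by ring.
rewrite ler_pdivlMr //.
have [t0|tpos] := eqVneq (dF Xhat Q) 0.
  by rewrite t0 mul0r !mulr_ge0.
have tp : 0 < dF Xhat Q by rewrite lt_def tpos dF0.
nra.
Qed.
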